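(* Let $G$ be a connected graph with $n\ge 2$ vertices and let $x$ be an $l_\infty$-Fiedler vector of $G$. Then $\|x\|_2^2\ge \dfrac{n}{n-1}$. Moreover, equality holds if and only if $G$ is isomorphic to the complete graph $K_n$.
   Context: For a finite simple undirected graph $G$ with $n$ vertices, let $\mathcal{F}=\{x\in\mathbb{R}^{V(G)} : \sum_{v} x_v = 0,\ \|x\|_\infty = 1\}$, for $x\in\mathcal{F}$ let $\gamma_x(G)=\max_{uv\in E(G)}|x_u-x_v|$, and $\gamma(G)=\min_{x\in\mathcal{F}}\gamma_x(G)$. A vector $x\in\mathcal{F}$ with $\gamma_x(G)=\gamma(G)$ is called an $l_\infty$-Fiedler vector of $G$. $\|x\|_2$ is the Euclidean norm. *)

(* Defs.v *)
From mathcomp Require Import all_boot all_order all_algebra.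
From mathcomp Require Import reals.
Set Implicit Arguments. Unset Strict Implicit. Unset Printing Implicit Defensive.
Import Order.TTheory GRing.Theory Num.Theory.
Local Open Scope ring_scope.

Definition simple_graph (V : finType) (e : rel V) : Prop :=
  symmetric e /\ irreflexive e.

Definition connected_graph (V : finType) (e : rel V) : Prop :=
  forall u v : V, connect e u v.

Definition linf_norm (R : realType) (V : finType) (x : V -> R) : R :=
  \big[Num.max/0]_(v : V) `|x v|.

Definition feasible (R : realType) (V : finType) (x : V -> R) : Prop :=
  \sum_(v : V) x v = 0 /\ linf_norm x = 1.

Definition gamma_x (R : realType) (V : finType) (e : rel V) (x : V -> R) : R :=
  \big[Num.max/0]_(p : V * V | e p.1 p.2) `|x p.1 - x p.2|.

Definition linf_fiedler (R : realType) (V : finType) (e : rel V) (x : V -> R) : Prop :=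
  feasible x /\ forall y : V -> R, feasible y -> gamma_x e x <= gamma_x e y.

Definition sqnorm2 (R : realType) (V : finType) (x : V -> R) : R :=
  \sum_(v : V) x v ^+ 2.

Definition complete_rel (n : nat) : rel 'I_n := fun u v => u != v.

Arguments complete_rel n : clear implicits.

Definition graph_iso (V W : finType) (e : rel V) (f' : rel W) : Prop :=
  exists f : V -> W, bijective f /\ forall u v, e u v = f' (f u) (f v).

(* Main.v *)
Require Import Defs.
From mathcomp Require Import all_boot all_order all_algebra.
From mathcomp Require Import reals ring lra.
Import Order.TTheory GRing.Theory Num.Theory.
Local Open Scope ring_scope.
Set Implicit Arguments.

Section S.
Variables (R : realType) (V : finType).

Lemma top_exists (x : V -> R) (v : V) : feasible x -> exists v0, `|x v0| = 1.
Proof.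
case=> _; rewrite /linf_norm.
have [i0 _ ->] := @eq_bigmax _ _ V 0 v xpredT (fun w => `|x w|) isT (fun i _ => normr_ge0 (x i)).
by exists i0.
Qed.

Lemma sum_const_ne (v0 : V) (c : R) : \sum_(w | w != v0) c = (#|V|%:R - 1) * c.
Proof.
rewrite sumr_const.
have -> : #|[pred w | w != v0]| = #|V|.-1 by rewrite -(cardC1 v0); apply: eq_card.
have : (0 < #|V|)%N by apply/card_gt0P; exists v0.
case: #|V| => // k _ /=; by rewrite -natr1 addrK mulr_natl.
Qed.
Lemma decomp (x : V -> R) (v0 : V) : \sum_v x v = 0 -> x v0 ^+ 2 = 1 -> (2 <= #|V|)%N ->
  sqnorm2 x = #|V|%:R / (#|V|%:R - 1) + \sum_(w | w != v0) (x w + x v0 / (#|V|%:R - 1)) ^+ 2.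
Proof.
move=> s0 x1 n2.
set N := (#|V|%:R - 1 : R).
have Npos : 0 < N by rewrite /N subr_gt0 ltr1n.
have S1 : \sum_(w | w != v0) x w = - x v0.
  by apply/eqP; rewrite -subr_eq0 opprK addrC -(bigD1 _ (isT : xpredT v0)) s0.
have E : \sum_(w | w != v0) (x w + x v0 / N) ^+ 2 =
   \sum_(w | w != v0) x w ^+ 2 + (2 * (x v0 / N)) * \sum_(w | w != v0) x w + N * (x v0 / N) ^+ 2.
  rewrite -(sum_const_ne v0) mulr_sumr -!big_split /=; apply: eq_bigr => w _; ring.
rewrite E S1 /sqnorm2 (bigD1 v0) //= x1.
have n1 : #|V|%:R = N + 1 by rewrite /N subrK.
rewrite n1; have key : (N + 1) / N = 1 + x v0 ^+ 2 / N by rewrite x1; field; exact/lt0r_neq0.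
rewrite key; clearbody N; field; exact/lt0r_neq0.
Qed.

Lemma neighbor (e : rel V) (v0 : V) : connected_graph e -> (2 <= #|V|)%N -> exists w, e v0 w.
Proof.
move=> con n2.
have : (0 < #|predC1 v0|)%N by rewrite cardC1; case: #|V| n2 => // [[]].
case/card_gt0P => w; rewrite inE => wv.
have := con v0 w; case/connectP => [[|a p]] /=; first by move=> _ wE; rewrite wE eqxx in wv.
by case/andP => ea _ _; exists a.
Qed.

Lemma bad_z (e : rel V) (u v : V) : simple_graph e -> u != v -> ~~ e u v ->
  exists z : V -> R, feasible z /\ gamma_x e z <= 1.
Proof.
move=> [sym irr] uv euv.
pose z w : R := (w == u)%:R - (w == v)%:R.
exists z; split; first split.
- rewrite /z sumrB (bigD1 u) //= big1 => [|w /negPf -> //].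
  rewrite (bigD1 v) //= big1 => [|w /negPf -> //].
  by rewrite !eqxx subrr.
- apply/le_anti/andP; split.
    apply/bigmax_leP; split => // w _; rewrite /z.
    by case: (w == u); case: (w == v); rewrite /= ?subr0 ?sub0r ?subrr ?normrN ?normr1 ?normr0.
  by apply: (@bigmax_sup _ _ _ _ u) => //; rewrite /z eqxx (negPf uv) /= subr0 normr1.
- rewrite /gamma_x; apply/bigmax_leP; split => // -[a b] /= eab.
  rewrite /z.
  case: (a =P u) => au; case: (a =P v) => av; case: (b =P u) => bu; case: (b =P v) => bv /=;
  try (rewrite ler_norml; lra).
  all: try by move: uv; rewrite -au -av eqxx.
  all: try by move: uv; rewrite -bu -bv eqxx.
  all: try by move: euv; rewrite -au -bv eab.
  all: try by move: euv; rewrite -av -bu -sym eab.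
  all: idtac.
Qed.

Lemma iso_complete (e : rel V) : simple_graph e ->
  (graph_iso e (complete_rel #|V|) <-> forall u v, e u v = (u != v)).
Proof.
move=> [sym irr]; split.
  case=> f [bf H] u v; rewrite H /complete_rel (inj_eq (bij_inj bf)) //.
move=> H; exists enum_rank; split.
  exact: (Bijective (@enum_rankK V) (@enum_valK V)).
by move=> u v; rewrite H /complete_rel (inj_eq (@enum_rank_inj V)).
Qed.

Lemma gamma_ge (e : rel V) (x : V -> R) a b : e a b -> `|x a - x b| <= gamma_x e x.
Proof.
move=> eab.
exact: (@le_bigmax_cond _ _ _ 0 (a, b) (fun p => e p.1 p.2) (fun p => `|x p.1 - x p.2|) eab).
Qed.
End S.

Theorem lemma4p4 (R : realType) (V : finType) (e : rel V) (x : V -> R) :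
  simple_graph e -> connected_graph e -> (2 <= #|V|)%N ->
  linf_fiedler e x ->
  (#|V|%:R / (#|V|%:R - 1) <= sqnorm2 x) /\
  (sqnorm2 x = #|V|%:R / (#|V|%:R - 1) <-> graph_iso e (complete_rel #|V|)).
Proof.
move=> sg con n2 [feas fied].
have [v _] : exists v : V, v \in V by apply/card_gt0P; apply: ltnW.
have [v0 x1n] := top_exists v feas.
have x1 : x v0 ^+ 2 = 1 by rewrite -real_normK ?num_real // x1n expr1n.
have D := decomp x v0 feas.1 x1 n2.
set N := (#|V|%:R - 1 : R) in D *.
have Npos : 0 < N by rewrite /N subr_gt0 ltr1n.
have n1 : #|V|%:R = N + 1 by rewrite /N subrK.
have Sge : 0 <= \sum_(w | w != v0) (x w + x v0 / N) ^+ 2 by apply: sumr_ge0 => w _; exact: sqr_ge0.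
have nrm : `|x v0 + x v0 / N| = #|V|%:R / N.
  have -> : x v0 + x v0 / N = x v0 * (#|V|%:R / N) by rewrite n1; field; exact/lt0r_neq0.
  by rewrite normrM x1n mul1r ger0_norm // divr_ge0 // ?ler0n // ltW.
have nN1 : 1 < #|V|%:R / N by rewrite ltr_pdivlMr // n1 mul1r ltrDl.
split; first by rewrite D lerDl.
rewrite iso_complete //; split.
- move=> eq.
  have S0 : \sum_(w | w != v0) (x w + x v0 / N) ^+ 2 = 0.
    by apply: (addrI (#|V|%:R / N)); rewrite -D eq addr0.
  have xw : forall w, w != v0 -> x w = - (x v0 / N).
    move=> w wv; apply/eqP; rewrite -addr_eq0 -sqrf_eq0; apply/eqP.
    exact: (psumr_eq0P (fun i _ => sqr_ge0 _) S0).
  have [w ew] := neighbor v0 con n2.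
  have wv : w != v0 by apply: contraTneq ew => ->; rewrite sg.2.
  have g1 : #|V|%:R / N <= gamma_x e x.
    by rewrite -nrm -[x v0 / N]opprK -(xw w wv) gamma_ge.
  case: (boolP [forall u, forall v, e u v == (u != v)]) => [/forallP H|]; last first.
  2: by move=> u v1; apply/eqP; exact: (forallP (H u)).
  rewrite negb_forall => /existsP [u]; rewrite negb_forall => /existsP [v'] H.
  have uv : u != v'.
    by apply: contraNneq H => ->; rewrite sg.2 eqxx.
  have euv : ~~ e u v' by move: H; rewrite uv; case: (e u v').
  have [z [fz gz]] := @bad_z R _ _ _ _ sg uv euv.
  have := fied z fz; lra.
- move=> comp.
  pose y w : R := if w == v0 then x v0 else - (x v0 / N).
  have S1 : \sum_(w | w != v0) x w = - x v0.
    by apply/eqP; rewrite -subr_eq0 opprK addrC -(bigD1 _ (isT : xpredT v0)) feas.1.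
  have fy : feasible y.
    split.
      rewrite (bigD1 v0) //= /y eqxx.
      rewrite (eq_bigr (fun _ => - (x v0 / N))) => [|w /negPf -> //].
      rewrite sum_const_ne -/N; field; exact/lt0r_neq0.
    apply/le_anti/andP; split.
      apply/bigmax_leP; split => // w _; rewrite /y; case: (w == v0); first by rewrite x1n.
      rewrite normrN normrM x1n mul1r ger0_norm; last by rewrite invr_ge0 ltW.
      rewrite invf_le1 // /N; have : (2%:R <= #|V|%:R :> R) by rewrite ler_nat.
      lra.
    by apply: (@bigmax_sup _ _ _ _ v0) => //; rewrite /y eqxx x1n.
  have gy : gamma_x e y <= #|V|%:R / N.
    rewrite /gamma_x; apply/bigmax_leP; split; first by rewrite divr_ge0 // ?ler0n // ltW.
    move=> [a b] /= _; rewrite /y.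
    have h0 : 0 <= #|V|%:R / N by rewrite divr_ge0 // ?ler0n // ltW.
    case: (a == v0); case: (b == v0) => /=.
    - by rewrite subrr normr0.
    - by rewrite opprK nrm.
    - by rewrite -opprD normrN addrC nrm.
    - by rewrite subrr normr0.
  have gx := le_trans (fied y fy) gy.
  have x0nz : x v0 != 0 by apply: contra_eqN x1n => /eqP ->; rewrite normr0 eq_sym oner_eq0.
  have dge : forall w, w != v0 -> 0 <= x v0 * (x w + x v0 / N).
    move=> w wv.
    have h1 : `|x v0 - x w| <= #|V|%:R / N.
      by apply: le_trans gx; apply: gamma_ge; rewrite comp eq_sym.
    have h2 : x v0 * (x v0 - x w) <= `|x v0 - x w|.
      by rewrite -[X in _ <= X]mul1r -x1n -normrM ler_norm.
    have e1 : x v0 * (x v0 - x w) = 1 - x v0 * x w.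
      by rewrite mulrBr -expr2 x1.
    have e2 : x v0 * (x w + x v0 / N) = x v0 * x w + 1 / N.
      by rewrite mulrDr mulrA -expr2 x1.
    have e3 : #|V|%:R / N = 1 + 1 / N by rewrite n1; field; exact/lt0r_neq0.
    rewrite e2; rewrite e1 e3 in h2 h1; lra.
  have dsum : \sum_(w | w != v0) x v0 * (x w + x v0 / N) = 0.
    rewrite -mulr_sumr big_split /= S1 sum_const_ne -/N.
    have -> : N * (x v0 / N) = x v0 by field; exact/lt0r_neq0.
    by rewrite addNr mulr0.
  have S0 : \sum_(w | w != v0) (x w + x v0 / N) ^+ 2 = 0.
    apply: big1 => w wv.
    have := psumr_eq0P dge dsum wv.
    by move/eqP; rewrite mulf_eq0 (negPf x0nz) /= => /eqP ->; rewrite expr2 mulr0.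
  by rewrite D S0 addr0.
Qed.
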